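(* Let $I=[a,b]$ be a compact interval, $r\ge 1$ an integer, $\varphi\in C^r(I,\mathbb{R})$, and put $C_r:=\|\varphi^{(r)}\|_{L^\infty(I)}$. Then there exists a decomposition of the set $\{x\in I:\varphi(x)\neq 0\}$ into pairwise disjoint intervals $I_{\lambda,\iota}$, where $\lambda$ ranges over the set of all positive dyadic numbers $\lambda\le\|\varphi\|_\infty$ and, for each such $\lambda$, $\iota$ ranges over an index set $\mathcal{I}_\lambda$, such that: (i) $|\mathcal{I}_\lambda|\le 10r\big(1+|I|\,C_r^{1/r}\lambda^{-1/r}\big)$ for every such $\lambda$; (ii) for every such $\lambda$, every $\iota\in\mathcal{I}_\lambda$ and every $x\in I_{\lambda,\iota}$ one has $\tfrac12\lambda<|\varphi(x)|<4\lambda$.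
   Context: A dyadic number is a number of the form $2^j$, $j\in\mathbb{Z}$. $|I|$ denotes the length of $I$ and $|\mathcal{I}_\lambda|$ the cardinality of the index set. *)

(* Defs.v *)
From Stdlib Require Import Reals ZArith.
From Coquelicot Require Import Coquelicot.
Open Scope R_scope.

Definition inI (a b x : R) : Prop := a <= x <= b.

Definition has_derive_on (a b : R) (f f' : R -> R) : Prop :=
  forall x, inI a b x ->
    filterlim (fun y => (f y - f x) / (y - x))
      (within (fun y => inI a b y /\ y <> x) (locally x)) (locally (f' x)).

Definition continuous_on_I (a b : R) (f : R -> R) : Prop :=
  forall x, inI a b x ->
    filterlim f (within (inI a b) (locally x)) (locally (f x)).

Definition is_Cr (a b : R) (r : nat) (phi : R -> R) (D : nat -> R -> R) : Prop :=
  (forall x, inI a b x -> D 0%nat x = phi x) /\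
  (forall k, (k < r)%nat -> has_derive_on a b (D k) (D (S k))) /\
  continuous_on_I a b (D r).

(* sup_{x in [a,b]} |f x|  (= L^oo norm on [a,b] for continuous f, a < b). *)
Definition sup_norm (a b : R) (f : R -> R) : R :=
  real (Lub_Rbar (fun y => exists x, inI a b x /\ y = Rabs (f x))).

(* x^(1/r) for x >= 0, with the convention 0^(1/r) = 0. *)
Definition rroot (r : nat) (x : R) : R :=
  if Rlt_dec 0 x then Rpower x (/ INR r) else 0.

Definition is_interval (J : R -> Prop) : Prop :=
  forall x y z, J x -> J y -> x <= z <= y -> J z.

(* Main.v *)
Require Import Defs.
From Stdlib Require Import Reals ZArith Lra Lia List Sorting.Sorted Classical ClassicalEpsilon.
From Coquelicot Require Import Coquelicot.
Open Scope R_scope.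

Lemma ball_R (x e y : R) : ball x e y <-> Rabs (y - x) < e.
Proof. reflexivity. Qed.

Lemma within_eps (P : R -> Prop) (f : R -> R) x l :
  filterlim f (within P (locally x)) (locally l) ->
  forall eps, 0 < eps -> exists d, 0 < d /\
    forall y, P y -> Rabs (y - x) < d -> Rabs (f y - l) < eps.
Proof.
  intros H eps He.
  destruct (proj1 (filterlim_locally f l) H (mkposreal eps He)) as [d Hd].
  exists (pos d). split. apply cond_pos.
  intros y Py Hy. apply (Hd y). apply ball_R. exact Hy. exact Py.
Qed.



Lemma rolle' (f f' : R -> R) u v : u < v ->
  (forall x, u < x < v -> derivable_pt_lim f x (f' x)) ->
  (forall x, u <= x <= v -> continuity_pt f x) -> f u = f v ->
  exists c, u < c < v /\ f' c = 0.
Proof.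
  intros Huv Hd Hc Hf.
  set (pr := fun x (H : u < x < v) => exist (fun l => derivable_pt_abs f x l) (f' x) (Hd x H)).
  destruct (Rolle f u v pr Hc Huv Hf) as [c [P HP]].
  exists c. split. exact P. exact HP.
Qed.

Lemma mvt_bound (f f' : R -> R) u v B x y :
  (forall t, u < t < v -> derivable_pt_lim f t (f' t)) ->
  (forall t, u <= t <= v -> continuity_pt f t) ->
  (forall t, u <= t <= v -> Rabs (f' t) <= B) ->
  u <= x <= v -> u <= y <= v -> Rabs (f x - f y) <= B * Rabs (x - y).
Proof.
  intros Hd Hc HB Hx Hy.
  destruct (MVT_gen f y x f') as [c [Hc1 Hc2]].
  - intros t Ht. apply is_derive_Reals. apply Hd.
    pose proof (Rmin_l y x). pose proof (Rmin_r y x).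
    pose proof (Rmax_l y x). pose proof (Rmax_r y x).
    destruct (Rle_dec y x); [rewrite Rmin_left, Rmax_right in Ht by lra|
      rewrite Rmin_right, Rmax_left in Ht by lra]; lra.
  - intros t Ht. apply Hc.
    destruct (Rle_dec y x); [rewrite Rmin_left, Rmax_right in Ht by lra|
      rewrite Rmin_right, Rmax_left in Ht by lra]; lra.
  - rewrite Hc2, Rabs_mult. apply Rmult_le_compat_r. apply Rabs_pos.
    apply HB.
    destruct (Rle_dec y x); [rewrite Rmin_left, Rmax_right in Hc1 by lra|
      rewrite Rmin_right, Rmax_left in Hc1 by lra]; lra.
Qed.

Lemma lemZ : forall k (f : nat -> R -> R) u v Mb,
  u <= v ->
  (forall i x, (i < k)%nat -> continuity_pt (f i) x) ->
  (forall i x, (i < k)%nat -> u < x < v -> derivable_pt_lim (f i) x (f (S i) x)) ->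
  (forall x, u <= x <= v -> Rabs (f k x) <= Mb) ->
  forall z : nat -> R,
  (forall i, (i < k)%nat -> u <= z i <= v /\ f 0%nat (z i) = 0) ->
  (forall i, (S i < k)%nat -> z i < z (S i)) ->
  forall x, u <= x <= v -> Rabs (f 0%nat x) <= Mb * (v - u) ^ k.
Proof.
  induction k as [|k IH]; intros f u v Mb Huv Hc Hd HB z Hz Hzs x Hx.
  - simpl. rewrite Rmult_1_r. apply HB. exact Hx.
  - assert (Hw : forall i, exists w, (S i < S k)%nat -> z i < w < z (S i) /\ f 1%nat w = 0).
    { intros i. destruct (lt_dec (S i) (S k)) as [Hi|Hi].
      - destruct (Hz i ltac:(lia)) as [Hzi1 Hzi2].
        destruct (Hz (S i) Hi) as [Hzi3 Hzi4].
        pose proof (Hzs i Hi).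
        destruct (rolle' (f 0%nat) (f 1%nat) (z i) (z (S i))) as [c [Hc1 Hc2]].
        + assumption.
        + intros t Ht. apply Hd. lia. lra.
        + intros t Ht. apply Hc. lia.
        + rewrite Hzi2, Hzi4. reflexivity.
        + exists c. intros _. split; assumption.
      - exists 0. intros H. lia. }
    set (w := fun i => proj1_sig (constructive_indefinite_description _ (Hw i))).
    assert (Hwp : forall i, (S i < S k)%nat -> z i < w i < z (S i) /\ f 1%nat (w i) = 0).
    { intros i. unfold w. destruct (constructive_indefinite_description _ (Hw i)) as [wi Hwi].
      simpl. exact Hwi. }
    assert (H1 : forall t, u <= t <= v -> Rabs (f 1%nat t) <= Mb * (v - u) ^ k).
    { intros t Ht.
      apply (IH (fun i => f (S i)) u v Mb Huv) with (z := w).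
      - intros i y Hi. apply Hc. lia.
      - intros i y Hi Hy. apply Hd. lia. exact Hy.
      - exact HB.
      - intros i Hi. destruct (Hwp i ltac:(lia)) as [[Hw1 Hw2] Hw3].
        destruct (Hz i ltac:(lia)). destruct (Hz (S i) ltac:(lia)).
        split. lra. exact Hw3.
      - intros i Hi. destruct (Hwp i ltac:(lia)) as [[Hw1 Hw2] Hw3].
        destruct (Hwp (S i) ltac:(lia)) as [[Hw4 Hw5] Hw6]. lra.
      - exact Ht. }
    destruct (Hz 0%nat ltac:(lia)) as [Hz0 Hz0'].
    pose proof (mvt_bound (f 0%nat) (f 1%nat) u v (Mb * (v - u) ^ k) x (z 0%nat)) as HM.
    rewrite Hz0', Rminus_0_r in HM.
    assert (HMb : 0 <= Mb * (v - u) ^ k).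
    { apply Rle_trans with (Rabs (f 1%nat x)). apply Rabs_pos. apply H1. exact Hx. }
    apply Rle_trans with (Mb * (v - u) ^ k * Rabs (x - z 0%nat)).
    + apply HM.
      * intros t Ht. apply Hd. lia. exact Ht.
      * intros t Ht. apply Hc. lia.
      * exact H1.
      * exact Hx.
      * exact Hz0.
    + simpl. rewrite (Rmult_comm (v - u)), <- Rmult_assoc.
      apply Rmult_le_compat_l. exact HMb.
      unfold Rabs; destruct Rcase_abs; lra.
Qed.


Fixpoint cnt (col : nat -> nat) (c s n : nat) : nat :=
  match n with
  | O => O
  | S n' => (cnt col c s n' + (if Nat.eqb (col (s + n')%nat) c then 1 else 0))%nat
  end.

Lemma cnt_sum col s n : (forall i, col i < 4)%nat ->
  (cnt col 0 s n + cnt col 1 s n + cnt col 2 s n + cnt col 3 s n = n)%nat.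
Proof.
  intros Hc. induction n as [|n IH]; simpl. reflexivity.
  pose proof (Hc (s + n)%nat).
  destruct (col (s + n)%nat) as [|[|[|[|x]]]]; simpl; lia.
Qed.

Lemma extract col c s : forall n t, (t <= cnt col c s n)%nat ->
  exists g : nat -> nat, (forall k, (k < t)%nat -> (s <= g k < s + n)%nat /\ col (g k) = c) /\
    (forall k, (S k < t)%nat -> (g k < g (S k))%nat).
Proof.
  induction n as [|n IH]; intros t Ht; simpl in Ht.
  - exists (fun _ => O). split; intros; lia.
  - destruct (Nat.eqb (col (s + n)%nat) c) eqn:Hcol.
    + apply Nat.eqb_eq in Hcol.
      destruct t as [|t]. { exists (fun _ => O). split; intros; lia. }
      destruct (IH t ltac:(lia)) as [g [Hg1 Hg2]].
      exists (fun k => if Nat.ltb k t then g k else (s + n)%nat). split.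
      * intros k Hk. destruct (Nat.ltb k t) eqn:E.
        -- apply Nat.ltb_lt in E. destruct (Hg1 k E). split. lia. auto.
        -- split. lia. exact Hcol.
      * intros k Hk. destruct (Nat.ltb k t) eqn:E; destruct (Nat.ltb (S k) t) eqn:E'.
        -- apply Nat.ltb_lt in E'. apply Hg2. exact E'.
        -- apply Nat.ltb_lt in E. destruct (Hg1 k E). lia.
        -- apply Nat.ltb_lt in E'. apply Nat.ltb_ge in E. lia.
        -- apply Nat.ltb_ge in E. lia.
    + rewrite Nat.add_0_r in Ht. destruct (IH t Ht) as [g [Hg1 Hg2]].
      exists g. split. intros k Hk. destruct (Hg1 k Hk). split. lia. auto. exact Hg2.
Qed.

Lemma pigeon col s m : (forall i, col i < 4)%nat ->
  exists c g, (c < 4)%nat /\ (forall k, (k < S m)%nat -> (s <= g k <= s + 4 * m)%nat /\ col (g k) = c) /\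
    (forall k, (S k < S m)%nat -> (g k < g (S k))%nat).
Proof.
  intros Hc. pose proof (cnt_sum col s (S (4 * m)) Hc) as Hs.
  assert (exists c, c < 4 /\ S m <= cnt col c s (S (4 * m)))%nat as [c [Hc4 Hcm]].
  { destruct (le_lt_dec (S m) (cnt col 0 s (S (4 * m)))). exists O. split; lia.
    destruct (le_lt_dec (S m) (cnt col 1 s (S (4 * m)))). exists 1%nat. split; lia.
    destruct (le_lt_dec (S m) (cnt col 2 s (S (4 * m)))). exists 2%nat. split; lia.
    exists 3%nat. split; lia. }
  destruct (extract col c s _ _ Hcm) as [g [Hg1 Hg2]].
  exists c, g. split. exact Hc4. split.
  - intros k Hk. destruct (Hg1 k Hk). split. lia. auto.
  - exact Hg2.
Qed.

Lemma chain_mono (p q : nat -> R) K :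
  (forall i, (i < K)%nat -> p i < q i) ->
  (forall i, (S i < K)%nat -> q i < p (S i)) ->
  forall m n, (m < n < K)%nat -> q m < p n.
Proof.
  intros H1 H2 m n. induction n as [|n IH]; intros Hmn. lia.
  destruct (Nat.eq_dec m n) as [->|Hne]. apply H2. lia.
  specialize (IH ltac:(lia)). pose proof (H1 n ltac:(lia)). pose proof (H2 n ltac:(lia)). lra.
Qed.

Lemma chain_count (p q : nat -> R) (K : nat) a h (M P : nat) :
  0 < h ->
  (forall i, (i < K)%nat -> a <= p i /\ p i < q i /\ q i <= a + INR M * h) ->
  (forall i, (S i < K)%nat -> q i < p (S i)) ->
  (forall s0 k, (k < M)%nat -> (s0 + P < K)%nat ->
     (forall i, (s0 <= i <= s0 + P)%nat -> a + INR k * h <= p i /\ q i <= a + INR k * h + h) -> False) ->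
  (K <= M * (P + 1))%nat.
Proof.
  intros Hh H1 H2 Hpiece.
  assert (Hpq : forall i, (i < K)%nat -> p i < q i) by (intros i Hi; apply H1; exact Hi).
  pose proof (chain_mono p q K Hpq H2) as Hmono.
  assert (Hpm : forall m n, (m <= n < K)%nat -> p m <= p n).
  { intros m n Hmn. destruct (Nat.eq_dec m n) as [->|Hne]. lra.
    pose proof (Hmono m n ltac:(lia)). pose proof (Hpq m ltac:(lia)). lra. }
  assert (Claim : forall k i, (i < K)%nat -> p i < a + INR k * h -> (i < k * (P + 1))%nat).
  { induction k as [|k IH]; intros i Hi Hp.
    - simpl in Hp. destruct (H1 i Hi). lra.
    - destruct (le_lt_dec (S k * (P + 1)) i) as [Hge|Hlt]; [exfalso|exact Hlt].
      set (s0 := (i - (P + 1))%nat).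
      destruct (Rlt_dec (p s0) (a + INR k * h)) as [Hs|Hs].
      + pose proof (IH s0 ltac:(unfold s0; lia) Hs). unfold s0 in H. simpl in Hge. lia.
      + apply Rnot_lt_le in Hs.
        apply (Hpiece s0 k).
        * destruct (H1 s0 ltac:(unfold s0; lia)) as [_ [Ha1 Ha2]].
          assert (INR k * h < INR M * h) by lra.
          apply INR_lt. apply Rmult_lt_reg_r with h; lra.
        * unfold s0. simpl in Hge. lia.
        * intros i' Hi'. split.
          -- pose proof (Hpm s0 i' ltac:(unfold s0 in *; simpl in Hge; lia)). lra.
          -- pose proof (Hmono i' i ltac:(unfold s0 in *; simpl in Hge; lia)).
             rewrite S_INR in Hp. lra. }
  destruct K as [|K']. lia.
  destruct (H1 K' ltac:(lia)) as [_ [Hq1 Hq2]].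
  pose proof (Claim M K' ltac:(lia) ltac:(lra)). lia.
Qed.


Section Comp.
Variable F : R -> Prop.

Definition Ec x y := F x /\ F y /\ forall t, Rmin x y <= t <= Rmax x y -> F t.
Definition Rr x y := x < y /\ ~ Ec x y.
Definition good (l : list R) := List.Forall F l /\ Sorted Rr l.

Ltac mm := unfold Rmin, Rmax in *; repeat destruct Rle_dec; try lra.

Lemma Ec_refl x : F x -> Ec x x.
Proof. intros H. split. exact H. split. exact H. intros t Ht. mm. replace t with x by lra. exact H. Qed.

Lemma Ec_sym x y : Ec x y -> Ec y x.
Proof. intros [H1 [H2 H3]]. split. exact H2. split. exact H1. intros t Ht. apply H3. mm. Qed.

Lemma Ec_trans x y z : Ec x y -> Ec y z -> Ec x z.
Proof.
  intros [H1 [H2 H3]] [H4 [H5 H6]]. split. exact H1. split. exact H5.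
  intros t Ht. destruct (Rle_dec t y).
  - destruct (Rle_dec x y); [destruct (Rle_dec y z)|].
    + apply H3. mm.
    + destruct (Rle_dec x t). apply H3; mm. apply H6; mm.
    + destruct (Rle_dec z t). apply H6; mm. apply H3; mm.
  - destruct (Rle_dec x t). 
    + destruct (Rle_dec t z). apply H6; mm. apply H3; mm.
    + destruct (Rle_dec t z). apply H6; mm. apply H3; mm.
Qed.

Lemma Ec_interval c x y t : Ec c x -> Ec c y -> x <= t <= y -> Ec c t.
Proof.
  intros [H1 [H2 H3]] [H4 [H5 H6]] Ht.
  assert (Ft : F t).
  { destruct (Rle_dec c t). destruct (Rle_dec c x).
    apply H6; mm. apply H6; mm. apply H3; mm. }
  split. exact H1. split. exact Ft. intros s Hs.
  destruct (Rle_dec c t).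
  - destruct (Rle_dec c y). apply H6; mm. apply H6; mm.
  - destruct (Rle_dec x c). apply H3; mm. apply H3; mm.
Qed.



Lemma Rr_trans x y z : Rr x y -> Rr y z -> Rr x z.
Proof.
  intros [H1 H2] [H3 H4]. split. lra. intros He. apply H2.
  destruct He as [He1 [He2 He3]]. split. exact He1. split.
  - apply He3. mm.
  - intros t Ht. apply He3. mm.
Qed.

Fixpoint insert (y : R) (l : list R) : list R :=
  match l with
  | nil => y :: nil
  | x :: l' => if Rlt_dec y x then y :: x :: l' else x :: insert y l'
  end.

Lemma insert_length y l : length (insert y l) = S (length l).
Proof. induction l as [|x l IH]; simpl. reflexivity. destruct Rlt_dec; simpl; auto. Qed.

Lemma insert_forall (P : R -> Prop) y l : P y -> List.Forall P l -> List.Forall P (insert y l).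
Proof.
  intros Hy Hl. induction Hl as [|x l Hx Hl IH]; simpl. constructor; auto.
  destruct Rlt_dec; constructor; auto.
Qed.

Lemma insert_hd x y l : HdRel Rr x l -> Rr x y -> HdRel Rr x (insert y l).
Proof.
  intros H Hxy. destruct l as [|z l]; simpl. constructor. exact Hxy.
  destruct Rlt_dec. constructor. exact Hxy. constructor. inversion H. assumption.
Qed.

Lemma insert_sorted y l : F y -> List.Forall (fun x => ~ Ec y x) l -> Sorted Rr l -> Sorted Rr (insert y l).
Proof.
  intros Fy Hn Hs. induction Hs as [|x l Hs IH Hhd]; simpl.
  - constructor. constructor. constructor.
  - inversion Hn as [|x' l' Hyx Hn']. subst.
    destruct Rlt_dec as [Hlt|Hge].
    + constructor. constructor. exact Hs. exact Hhd.
      constructor. split. exact Hlt. exact Hyx.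
    + constructor. apply IH. exact Hn'.
      apply insert_hd. exact Hhd. split.
      * destruct (Req_dec x y) as [->|Hne]. exfalso. apply Hyx. apply Ec_refl. exact Fy. lra.
      * intros H. apply Hyx. apply Ec_sym. exact H.
Qed.

Lemma exists_max (P : list R -> Prop) (B : nat) :
  (forall l, P l -> (length l <= B)%nat) -> P nil ->
  exists l, P l /\ forall l', P l' -> (length l' <= length l)%nat.
Proof.
  intros HB H0.
  assert (Hm : forall m, (exists l, P l /\ (B - m <= length l)%nat) ->
     exists l, P l /\ forall l', P l' -> (length l' <= length l)%nat).
  { induction m as [|m IH]; intros [l [Hl Hlen]].
    - exists l. split. exact Hl. intros l' Hl'. pose proof (HB l' Hl'). lia.
    - destruct (classic (exists l', P l' /\ (B - m <= length l')%nat)) as [Hex|Hnex].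
      + apply IH. exact Hex.
      + exists l. split. exact Hl. intros l' Hl'.
        destruct (le_lt_dec (B - m) (length l')). exfalso. apply Hnex. exists l'. auto. lia. }
  apply (Hm B). exists nil. split. exact H0. lia.
Qed.

Lemma good_max_cover l : good l -> (forall l', good l' -> (length l' <= length l)%nat) ->
  forall y, F y -> exists i, (i < length l)%nat /\ Ec (nth i l 0) y.
Proof.
  intros [Hf Hs] Hmax y Fy.
  destruct (classic (exists x, In x l /\ Ec x y)) as [[x [Hin He]]|Hno].
  - destruct (In_nth l x 0 Hin) as [i [Hi Hx]]. exists i. rewrite Hx. auto.
  - exfalso.
    assert (Hg : good (insert y l)).
    { split. apply insert_forall; auto. apply insert_sorted. exact Fy.
      apply Forall_forall. intros x Hx He. apply Hno. exists x. split. exact Hx. apply Ec_sym. exact He.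
      exact Hs. }
    pose proof (Hmax _ Hg). rewrite insert_length in H. lia.
Qed.

Lemma good_pairwise l : good l -> forall i j, (i < j < length l)%nat ->
  ~ Ec (nth i l 0) (nth j l 0).
Proof.
  intros [_ Hs]. apply Sorted_StronglySorted in Hs; [|intros x y z; apply Rr_trans].
  induction Hs as [|x l Hs IH Hall]; intros i j Hij; simpl in Hij. lia.
  destruct i as [|i]; destruct j as [|j]; try lia; simpl.
  - rewrite Forall_forall in Hall. apply Hall. apply nth_In. lia.
  - apply IH. lia.
Qed.

Variable bb : R.
Variables Qp Qq : R -> Prop.
Hypothesis Hub : forall y, F y -> y <= bb.
Hypothesis Hstep : forall x y, F x -> F y -> x < y -> ~ Ec x y ->
  exists p q, x < p /\ p < q /\ q <= y /\ Qp p /\ Qq q.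

Lemma good_chain : forall l x, good (x :: l) ->
  exists p q : nat -> R,
    (forall i, (i < length l)%nat -> x < p i /\ p i < q i /\ q i <= bb /\ Qp (p i) /\ Qq (q i)) /\
    (forall i, (S i < length l)%nat -> q i < p (S i)).
Proof.
  induction l as [|y l IH]; intros x [Hf Hs].
  - exists (fun _ => 0), (fun _ => 0). split; intros i Hi; simpl in Hi; lia.
  - apply Sorted_inv in Hs. destruct Hs as [Hs Hhd]. apply HdRel_inv in Hhd. destruct Hhd as [Hxy Hne].
    inversion Hf as [|x' l' Fx Hf']. subst. inversion Hf' as [|y' l'' Fy Hf'']. subst.
    destruct (IH y (conj Hf' Hs)) as [p' [q' [Hp1 Hp2]]].
    destruct (Hstep x y Fx Fy Hxy Hne) as [p0 [q0 [H1 [H2 [H3 [H4 H5]]]]]].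
    exists (fun i => match i with O => p0 | S i' => p' i' end),
           (fun i => match i with O => q0 | S i' => q' i' end). split.
    + intros i Hi. destruct i as [|i].
      * pose proof (Hub y Fy). repeat split; auto; lra.
      * simpl in Hi. destruct (Hp1 i ltac:(lia)) as [A1 [A2 [A3 [A4 A5]]]].
        repeat split; auto; lra.
    + intros i Hi. destruct i as [|i].
      * simpl in Hi. destruct (Hp1 O ltac:(lia)). lra.
      * apply Hp2. simpl in Hi. lia.
Qed.

End Comp.
Section Main.
Variables (a b : R) (r : nat) (phi : R -> R) (D : nat -> R -> R).
Hypothesis Hab : a < b.
Hypothesis Hr : (1 <= r)%nat.
Hypothesis HC : is_Cr a b r phi D.

Definition clamp x := Rmax a (Rmin b x).

Lemma clamp_in x : inI a b (clamp x).
Proof. unfold clamp, inI, Rmax, Rmin. repeat destruct Rle_dec; lra. Qed.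

Lemma clamp_id x : inI a b x -> clamp x = x.
Proof. unfold clamp, inI, Rmax, Rmin. intros. repeat destruct Rle_dec; lra. Qed.

Lemma clamp_lip x y : Rabs (clamp x - clamp y) <= Rabs (x - y).
Proof.
  unfold clamp, Rmax, Rmin. repeat destruct Rle_dec;
  unfold Rabs; repeat destruct Rcase_abs; lra.
Qed.

Definition E k x := D k (clamp x).

Lemma contI_D k : (k <= r)%nat -> continuous_on_I a b (D k).
Proof.
  intros Hk. destruct HC as [H0 [Hd Hcr]].
  destruct (Nat.eq_dec k r) as [->|Hne]. exact Hcr.
  assert (Hlt : (k < r)%nat) by lia.
  intros x Hx. apply filterlim_locally. intros eps.
  destruct (within_eps _ _ _ _ (Hd k Hlt x Hx) 1 Rlt_0_1) as [d [Hd0 Hdd]].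
  set (K := Rabs (D (S k) x) + 1).
  assert (HK : 0 < K) by (unfold K; pose proof (Rabs_pos (D (S k) x)); lra).
  assert (He : 0 < Rmin d (eps / K)).
  { apply Rmin_pos. lra. apply Rdiv_lt_0_compat. apply cond_pos. lra. }
  exists (mkposreal _ He). intros y Hy HIy. apply ball_R. change (Rabs (y - x) < Rmin d (eps / K)) in Hy.
  destruct (Req_dec y x) as [->|Hyx].
  { rewrite Rminus_diag, Rabs_R0. apply cond_pos. }
  assert (Hy1 : Rabs (y - x) < d) by (pose proof (Rmin_l d (eps/K)); lra).
  assert (Hy2 : Rabs (y - x) < eps / K) by (pose proof (Rmin_r d (eps/K)); lra).
  specialize (Hdd y (conj HIy Hyx) Hy1).
  assert (Hq : Rabs ((D k y - D k x) / (y - x)) < K).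
  { unfold K. pose proof (Rabs_triang_inv ((D k y - D k x) / (y - x)) (D (S k) x)). lra. }
  assert (Hyx' : y - x <> 0) by lra.
  replace (D k y - D k x) with ((D k y - D k x) / (y - x) * (y - x)) by (field; exact Hyx').
  rewrite Rabs_mult.
  apply Rle_lt_trans with (K * Rabs (y - x)).
  { apply Rmult_le_compat_r. apply Rabs_pos. lra. }
  replace (pos eps) with (K * (eps / K)) by (field; lra).
  apply Rmult_lt_compat_l; lra.
Qed.

Lemma contE k : (k <= r)%nat -> forall x, continuity_pt (E k) x.
Proof.
  intros Hk x. apply continuity_pt_filterlim. apply filterlim_locally. intros eps.
  pose proof (contI_D k Hk (clamp x) (clamp_in x)) as Hc.
  destruct (within_eps _ _ _ _ Hc eps (cond_pos eps)) as [d [Hd0 Hdd]].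
  exists (mkposreal _ Hd0). intros y Hy. change (Rabs (y - x) < d) in Hy. apply ball_R.
  unfold E. apply Hdd. apply clamp_in.
  pose proof (clamp_lip y x). lra.
Qed.

Lemma derE k : (k < r)%nat -> forall x, a < x < b -> derivable_pt_lim (E k) x (E (S k) x).
Proof.
  intros Hk x Hx eps Heps. destruct HC as [H0 [Hd Hcr]].
  assert (HIx : inI a b x) by (unfold inI; lra).
  destruct (within_eps _ _ _ _ (Hd k Hk x HIx) eps Heps) as [d [Hd0 Hdd]].
  assert (Hpos : 0 < Rmin d (Rmin (x - a) (b - x))).
  { apply Rmin_pos. lra. apply Rmin_pos; lra. }
  exists (mkposreal _ Hpos). intros h Hh0 Hh. cbn [pos] in Hh.
  pose proof (Rmin_l d (Rmin (x - a) (b - x))).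
  pose proof (Rmin_r d (Rmin (x - a) (b - x))).
  pose proof (Rmin_l (x - a) (b - x)). pose proof (Rmin_r (x - a) (b - x)).
  assert (Hxh : inI a b (x + h)).
  { unfold inI. unfold Rabs in Hh; destruct Rcase_abs in Hh; lra. }
  unfold E. rewrite (clamp_id x HIx), (clamp_id _ Hxh).
  assert (Hxh2 : x + h <> x) by lra.
  specialize (Hdd (x + h) (conj Hxh Hxh2)).
  replace (x + h - x) with h in Hdd by ring.
  apply Hdd. lra.
Qed.


Definition Phi := E 0.
Definition Cr := sup_norm a b (D r).
Definition Sp := sup_norm a b phi.

Lemma contPhi x : continuity_pt Phi x.
Proof. apply contE. lia. Qed.

Lemma contAbsPhi x : continuity_pt (fun t => Rabs (Phi t)) x.
Proof.
  apply (continuity_pt_comp Phi Rabs x (contPhi x)). apply Rcontinuity_abs.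
Qed.

Lemma Phi_eq x : inI a b x -> Phi x = phi x.
Proof.
  intros Hx. unfold Phi, E. rewrite clamp_id by exact Hx. destruct HC as [H0 _]. apply H0. exact Hx.
Qed.

Lemma sup_bound (g : R -> R) B : (forall x, inI a b x -> Rabs (g x) <= B) ->
  forall x, inI a b x -> Rabs (g x) <= sup_norm a b g.
Proof.
  intros HB x Hx. unfold sup_norm.
  set (S := fun y => exists x, inI a b x /\ y = Rabs (g x)).
  pose proof (Lub_Rbar_correct S) as [Hub Hlub].
  assert (HSx : S (Rabs (g x))) by (exists x; auto).
  destruct (Lub_Rbar S) as [l| |] eqn:El.
  - simpl. apply (Hub _ HSx).
  - exfalso. assert (Hb : is_ub_Rbar S B).
    { intros y [z [Hz ->]]. simpl. apply HB. exact Hz. }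
    specialize (Hlub (Finite B) Hb). simpl in Hlub. exact Hlub.
  - exfalso. specialize (Hub _ HSx). simpl in Hub. exact Hub.
Qed.

Lemma bounded_cont (g : R -> R) : (forall x, continuity_pt g x) ->
  exists B, forall x, inI a b x -> Rabs (g x) <= B.
Proof.
  intros Hg.
  destruct (continuity_ab_maj (fun t => Rabs (g t)) a b) as [Mx [HM _]].
  lra. intros c _. apply (continuity_pt_comp g Rabs c (Hg c)). apply Rcontinuity_abs.
  exists (Rabs (g Mx)). intros x Hx. apply HM. exact Hx.
Qed.

Lemma phi_le_Sp x : inI a b x -> Rabs (Phi x) <= Sp.
Proof.
  intros Hx. rewrite Phi_eq by exact Hx. unfold Sp.
  destruct (bounded_cont Phi contPhi) as [B HB].
  apply sup_bound with B. intros y Hy. rewrite <- Phi_eq by exact Hy. apply HB. exact Hy. exact Hx.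
Qed.

Lemma Dr_le_Cr x : inI a b x -> Rabs (D r x) <= Cr.
Proof.
  intros Hx. unfold Cr.
  destruct (bounded_cont (E r) (contE r (le_n r))) as [B HB].
  apply sup_bound with B. intros y Hy. specialize (HB y Hy). unfold E in HB.
  rewrite clamp_id in HB by exact Hy. exact HB. exact Hx.
Qed.

Lemma Cr_ge0 : 0 <= Cr.
Proof.
  apply Rle_trans with (Rabs (D r a)). apply Rabs_pos. apply Dr_le_Cr. unfold inI; lra.
Qed.

Lemma Er_le_Cr x : Rabs (E r x) <= Cr.
Proof. unfold E. apply Dr_le_Cr. apply clamp_in. Qed.

Definition Lab (mu x : R) : Prop :=
  inI a b x /\ exists s, a <= s <= x /\ (Rabs (Phi s) = mu \/ (s = a /\ mu <= Rabs (Phi a))) /\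
    forall t, s <= t <= x -> mu / 2 < Rabs (Phi t) < 2 * mu.

Lemma Lab_uniq mu mu' x : 0 < mu -> Lab mu x -> Lab mu' x -> 2 * mu <= mu' -> False.
Proof.
  intros Hmu [Hx [s [Hs [Hs1 Hs2]]]] [_ [s' [Hs' [Hs1' Hs2']]]] Hle.
  assert (Hms : mu <= Rabs (Phi s)) by (destruct Hs1 as [H|[-> H]]; lra).
  assert (Hms' : mu' <= Rabs (Phi s')) by (destruct Hs1' as [H|[-> H]]; lra).
  destruct (Rle_dec s s').
  - pose proof (Hs2 s' ltac:(lra)). lra.
  - pose proof (Hs2' s ltac:(lra)).
    destruct Hs1 as [H7|[-> H7]]; lra.
Qed.

Definition pw (j : Z) := powerRZ 2 j.

Lemma pw_pos j : 0 < pw j.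
Proof. apply powerRZ_lt. lra. Qed.

Lemma pw_S j : pw (j + 1) = 2 * pw j.
Proof. unfold pw. rewrite powerRZ_add by lra. simpl. ring. Qed.

Lemma pw_mono j j' : (j < j')%Z -> 2 * pw j <= pw j'.
Proof.
  intros H. unfold pw. rewrite !powerRZ_Rpower by lra.
  replace (2 * Rpower 2 (IZR j)) with (Rpower 2 (IZR j + 1)).
  apply Rle_Rpower. lra. rewrite <- plus_IZR. apply IZR_le. lia.
  rewrite Rpower_plus, Rpower_1 by lra. ring.
Qed.

Lemma Lab_dy_uniq j j' x : Lab (pw j) x -> Lab (pw j') x -> j = j'.
Proof.
  intros H1 H2. destruct (Z.lt_total j j') as [H|[H|H]].
  - exfalso. apply (Lab_uniq _ _ x (pw_pos j) H1 H2). apply pw_mono. exact H.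
  - exact H.
  - exfalso. apply (Lab_uniq _ _ x (pw_pos j') H2 H1). apply pw_mono. exact H.
Qed.

Lemma Lab_valid mu x : Lab mu x -> mu <= Sp.
Proof.
  intros [Hx [s [Hs [Hs1 _]]]].
  assert (HIs : inI a b s) by (unfold inI in *; lra).
  pose proof (phi_le_Sp s HIs).
  destruct Hs1 as [H8|[-> H8]]; lra.
Qed.

Lemma Lab_bounds mu x : Lab mu x -> mu / 2 < Rabs (Phi x) < 2 * mu.
Proof. intros [Hx [s [Hs [_ Hs2]]]]. apply Hs2. lra. Qed.

Lemma dyadic_floor y : 0 < y -> exists k, pw k <= y < pw (k + 1).
Proof.
  intros Hy.
  assert (Hl2 : 0 < ln 2) by (rewrite <- ln_1; apply ln_increasing; lra).
  set (t := ln y / ln 2). destruct (archimed t) as [A1 A2].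
  exists (up t - 1)%Z. unfold pw. rewrite !powerRZ_Rpower by lra. unfold Rpower.
  replace (up t - 1 + 1)%Z with (up t) by ring.
  rewrite minus_IZR. simpl.
  assert (Ht : t * ln 2 = ln y) by (unfold t; field; lra).
  split.
  - rewrite <- (exp_ln y Hy). rewrite <- Ht.
    destruct (Req_dec (IZR (up t) - 1) t) as [E1|E1].
    + rewrite E1. lra.
    + apply Rlt_le. apply exp_increasing. apply Rmult_lt_compat_r. exact Hl2. lra.
  - rewrite <- (exp_ln y Hy) at 1. rewrite <- Ht. apply exp_increasing.
    apply Rmult_lt_compat_r. exact Hl2. lra.
Qed.

Lemma last_point (g : R -> R) u x al be :
  (forall t, continuity_pt g t) -> u <= x -> al < g x < be ->
  (exists t, u <= t <= x /\ (g t <= al \/ be <= g t)) ->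
  exists s, u <= s <= x /\ (g s = al \/ g s = be) /\ forall t, s < t <= x -> al < g t < be.
Proof.
  intros Hg Hux Hgx Hex.
  set (A := fun t => u <= t <= x /\ (g t <= al \/ be <= g t)).
  assert (Hb : bound A) by (exists x; intros t [Ht _]; lra).
  destruct (completeness A Hb Hex) as [s [Hub Hlub]].
  destruct Hex as [t0 Ht0].
  assert (Hus : u <= s) by (pose proof (Hub t0 Ht0); destruct Ht0; lra).
  assert (Hsx : s <= x) by (apply Hlub; intros t [Ht _]; lra).
  assert (Hright : forall t, s < t <= x -> al < g t < be).
  { intros t Ht. destruct (Rlt_dec al (g t)); destruct (Rlt_dec (g t) be); try lra;
    exfalso; assert (A t) by (split; [lra| lra]); pose proof (Hub t H); lra. }
  assert (Hs : g s <= al \/ be <= g s).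
  { destruct (Rle_dec (g s) al) as [H|H]. left; exact H.
    destruct (Rle_dec be (g s)) as [H'|H']. right; exact H'.
    exfalso. apply Rnot_le_lt in H. apply Rnot_le_lt in H'.
    assert (He : 0 < Rmin (g s - al) (be - g s)) by (apply Rmin_pos; lra).
    destruct (Hg s (Rmin (g s - al) (be - g s)) He) as [d [Hd Hdd]].
    assert (Hnub : ~ is_upper_bound A (s - d / 2)).
    { intros Hu. pose proof (Hlub _ Hu). lra. }
    apply Hnub. intros t Ht. destruct (Rle_dec t (s - d / 2)) as [Hl|Hl]. exact Hl.
    exfalso. apply Rnot_le_lt in Hl. pose proof (Hub t Ht).
    destruct (Req_dec t s) as [Hts|Hts].
    { subst t. destruct Ht as [_ [Ht|Ht]]; lra. }
    assert (Hdt : Rabs (g t - g s) < Rmin (g s - al) (be - g s)).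
    { apply (Hdd t). split. split. exact I. auto.
      simpl. unfold R_dist. unfold Rabs; destruct Rcase_abs; lra. }
    pose proof (Rmin_l (g s - al) (be - g s)). pose proof (Rmin_r (g s - al) (be - g s)).
    destruct Ht as [_ Ht].
    unfold Rabs in Hdt; destruct Rcase_abs in Hdt; lra. }
  exists s. split. lra. split; [|exact Hright].
  assert (Hsx' : s < x \/ s = x) by lra.
  assert (Hc : forall c, continuity (fun t => g t - c)).
  { intros c t. apply (continuity_pt_minus g (fun _ => c)). apply Hg.
    apply continuity_pt_const. intros ? ?. reflexivity. }
  destruct Hs as [Hs|Hs].
  - left. destruct (Req_dec (g s) al) as [E1|E1]. exact E1. exfalso.
    destruct Hsx' as [Hsx'|Hsx']; [|subst s; lra].
    assert (Hp : (g s - al) * (g x - al) <= 0) by nra.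
    destruct (IVT_cor (fun t => g t - al) s x (Hc al) ltac:(lra) Hp) as [z [Hz1 Hz2]].
    destruct (Req_dec z s) as [->|Hzs]. lra.
    pose proof (Hright z ltac:(lra)). lra.
  - right. destruct (Req_dec (g s) be) as [E1|E1]. exact E1. exfalso.
    destruct Hsx' as [Hsx'|Hsx']; [|subst s; lra].
    assert (Hp : (g s - be) * (g x - be) <= 0) by nra.
    destruct (IVT_cor (fun t => g t - be) s x (Hc be) ltac:(lra) Hp) as [z [Hz1 Hz2]].
    destruct (Req_dec z s) as [->|Hzs]. lra.
    pose proof (Hright z ltac:(lra)). lra.
Qed.


Lemma Lab_exists x : inI a b x -> Phi x <> 0 -> exists j, Lab (pw j) x.
Proof.
  intros Hx Hne.
  assert (Hy : 0 < Rabs (Phi x)) by (apply Rabs_pos_lt; exact Hne).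
  destruct (dyadic_floor _ Hy) as [k [Hk1 Hk2]].
  rewrite pw_S in Hk2. pose proof (pw_pos k) as Hpk.
  destruct (Req_dec (Rabs (Phi x)) (pw k)) as [Heq|Hneq].
  - exists k. split. exact Hx. exists x. split. unfold inI in Hx; lra. split. left; exact Heq.
    intros t Ht. replace t with x by lra. lra.
  - assert (Hlt : pw k < Rabs (Phi x)) by lra.
    destruct (classic (exists t, a <= t <= x /\ (Rabs (Phi t) <= pw k \/ 2 * pw k <= Rabs (Phi t))))
      as [Hex|Hnex].
    + destruct (last_point (fun t => Rabs (Phi t)) a x (pw k) (2 * pw k) contAbsPhi
        ltac:(unfold inI in Hx; lra) ltac:(lra) Hex) as [s [Hs [Hs1 Hs2]]].
      destruct Hs1 as [Hs1|Hs1].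
      * exists k. split. exact Hx. exists s. split. exact Hs. split. left; exact Hs1.
        intros t Ht. destruct (Req_dec t s) as [->|Hts]. lra.
        pose proof (Hs2 t ltac:(lra)). lra.
      * exists (k + 1)%Z. rewrite pw_S. split. exact Hx. exists s. split. exact Hs.
        split. left; exact Hs1.
        intros t Ht. destruct (Req_dec t s) as [->|Hts]. lra.
        pose proof (Hs2 t ltac:(lra)). lra.
    + exists k. split. exact Hx. exists a. split. unfold inI in Hx; lra. split.
      * right. split. reflexivity.
        destruct (Rle_dec (pw k) (Rabs (Phi a))) as [H|H]. exact H.
        exfalso. apply Hnex. exists a. split. unfold inI in Hx; lra. left; lra.
      * intros t Ht.
        destruct (Rle_dec (Rabs (Phi t)) (pw k)) as [H|H].
        { exfalso. apply Hnex. exists t. split. lra. left; exact H. }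
        destruct (Rle_dec (2 * pw k) (Rabs (Phi t))) as [H'|H'].
        { exfalso. apply Hnex. exists t. split. lra. right; exact H'. }
        lra.
Qed.

Definition Qp mu p := inI a b p /\ ~ (mu / 2 < Rabs (Phi p) < 2 * mu).
Definition Qq mu q := inI a b q /\ Rabs (Phi q) = mu.

Lemma step mu x y : Lab mu x -> Lab mu y -> x < y -> ~ Ec (Lab mu) x y ->
  exists p q, x < p /\ p < q /\ q <= y /\ Qp mu p /\ Qq mu q.
Proof.
  intros Hx Hy Hxy Hne.
  destruct (classic (exists t, x <= t <= y /\ ~ Lab mu t)) as [[t [Ht Hnt]]|Hall].
  2:{ exfalso. apply Hne. split. exact Hx. split. exact Hy. intros t Ht.
      rewrite Rmin_left, Rmax_right in Ht by lra.
      destruct (classic (Lab mu t)) as [H|H]. exact H. exfalso. apply Hall. exists t. auto. }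
  assert (Htx : x <> t) by (intros ->; contradiction).
  assert (Hty : t <> y) by (intros ->; contradiction).
  destruct Hx as [HIx [s [Hs [Hs1 Hs2]]]].
  destruct Hy as [HIy [s' [Hs' [Hs1' Hs2']]]].
  assert (HIt : inI a b t) by (unfold inI in *; lra).
  destruct (classic (exists p, x < p <= t /\ ~ (mu / 2 < Rabs (Phi p) < 2 * mu))) as [[p [Hp Hpn]]|Hnp].
  2:{ exfalso. apply Hnt. split. exact HIt. exists s. split. lra. split. exact Hs1.
      intros u Hu. destruct (Rle_dec u x). apply Hs2. lra.
      destruct (classic (mu / 2 < Rabs (Phi u) < 2 * mu)) as [H|H]. exact H.
      exfalso. apply Hnp. exists u. split. lra. exact H. }
  destruct (Rle_dec s' t) as [Hst|Hst].
  - exfalso. apply Hnt. split. exact HIt. exists s'. split. lra. split. exact Hs1'.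
    intros u Hu. apply Hs2'. lra.
  - destruct Hs1' as [Hq|[Hq _]]; [|unfold inI in HIt; lra].
    exists p, s'. split. lra. split. lra. split. lra. split.
    + split. unfold inI in *; lra. exact Hpn.
    + split. unfold inI in *; lra. exact Hq.
Qed.

Definition lv mu (c : nat) :=
  match c with O => 3 * mu / 4 | 1%nat => 3 * mu / 2 | 2%nat => - (3 * mu / 4) | _ => - (3 * mu / 2) end.
Definition colf mu P Q : nat :=
  if Rlt_dec 0 Q then (if Rlt_dec P mu then O else 1%nat) else (if Rlt_dec (- mu) P then 2%nat else 3%nat).

Lemma colf_lt mu P Q : (colf mu P Q < 4)%nat.
Proof. unfold colf. repeat destruct Rlt_dec; lia. Qed.

Lemma col_prop mu P Q : 0 < mu -> ~ (mu / 2 < Rabs P < 2 * mu) -> Rabs Q = mu ->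
  (P - lv mu (colf mu P Q)) * (Q - lv mu (colf mu P Q)) < 0 /\
  mu / 4 <= Rabs (P - lv mu (colf mu P Q)).
Proof.
  intros Hmu HP HQ.
  assert (HQ' : Q = mu \/ Q = - mu) by (unfold Rabs in HQ; destruct Rcase_abs; lra).
  assert (HP' : (- (mu / 2) <= P <= mu / 2) \/ 2 * mu <= P \/ P <= - (2 * mu)).
  { unfold Rabs in HP; destruct Rcase_abs; lra. }
  unfold colf. destruct HQ' as [->| ->]; destruct HP' as [HP'|[HP'|HP']];
  repeat destruct Rlt_dec; simpl; try lra; split;
  try nra; unfold Rabs; destruct Rcase_abs; lra.
Qed.

Lemma fE (L : R) : forall n, (1 <= n)%nat ->
  (fun i => match i with O => (fun t => Phi t - L) | S _ => E i end) n = E n.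
Proof. intros [|n] H. lia. reflexivity. Qed.

Lemma piece mu u v (p q : nat -> R) K s0 :
  0 < mu -> a <= u -> u <= v -> v <= b -> Cr * (v - u) ^ r < mu / 4 ->
  (forall i, (i < K)%nat -> p i < q i /\ Qp mu (p i) /\ Qq mu (q i)) ->
  (forall i, (S i < K)%nat -> q i < p (S i)) ->
  (s0 + 4 * (r - 1) < K)%nat ->
  (forall i, (s0 <= i <= s0 + 4 * (r - 1))%nat -> u <= p i /\ q i <= v) -> False.
Proof.
  intros Hmu Hau Huv Hvb Hh Hch Hcons HK Hrange.
  set (col := fun i => colf mu (Phi (p i)) (Phi (q i))).
  destruct (pigeon col s0 (r - 1) (fun i => colf_lt _ _ _)) as [c [g [Hc4 [Hg1 Hg2]]]].
  replace (S (r - 1)) with r in Hg1, Hg2 by lia.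
  set (L := lv mu c).
  assert (Hpq : forall i, (i < K)%nat -> p i < q i) by (intros i Hi; apply Hch; exact Hi).
  pose proof (chain_mono p q K Hpq Hcons) as Hmono.
  assert (Hcp : forall k, (k < r)%nat -> (Phi (p (g k)) - L) * (Phi (q (g k)) - L) < 0 /\
                    mu / 4 <= Rabs (Phi (p (g k)) - L)).
  { intros k Hk. destruct (Hg1 k Hk) as [Hgk Hcol].
    destruct (Hch (g k) ltac:(lia)) as [_ [[_ HQp] [_ HQq]]].
    unfold L. rewrite <- Hcol. unfold col. apply col_prop; assumption. }
  assert (Hcont : forall c0, continuity (fun t => Phi t - c0)).
  { intros c0 t. apply (continuity_pt_minus Phi (fun _ => c0)). apply contPhi.
    apply continuity_pt_const. intros ? ?. reflexivity. }
  assert (Hz : forall k, exists z, (k < r)%nat -> p (g k) < z < q (g k) /\ Phi z - L = 0).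
  { intros k. destruct (lt_dec k r) as [Hk|Hk]; [|exists 0; intros; lia].
    destruct (Hcp k Hk) as [Hprod _]. destruct (Hg1 k Hk) as [Hgk _].
    pose proof (Hpq (g k) ltac:(lia)).
    destruct (IVT_cor (fun t => Phi t - L) (p (g k)) (q (g k)) (Hcont L) ltac:(lra) ltac:(lra))
      as [z [Hz1 Hz2]].
    exists z. intros _. split; [|exact Hz2].
    destruct (Req_dec z (p (g k))) as [E1|E1]. { rewrite E1 in Hz2. rewrite Hz2 in Hprod. lra. }
    destruct (Req_dec z (q (g k))) as [E2|E2]. { rewrite E2 in Hz2. rewrite Hz2 in Hprod. lra. }
    lra. }
  set (z := fun k => proj1_sig (constructive_indefinite_description _ (Hz k))).
  assert (Hzp : forall k, (k < r)%nat -> p (g k) < z k < q (g k) /\ Phi (z k) - L = 0).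
  { intros k. unfold z. destruct (constructive_indefinite_description _ (Hz k)) as [zk Hzk].
    simpl. exact Hzk. }
  set (f := fun i => match i with O => (fun t => Phi t - L) | S _ => E i end).
  assert (Hg0 := Hg1 O ltac:(lia)). destruct Hg0 as [Hg0 _].
  destruct (Hrange (g O) ltac:(lia)) as [Hu0 Hv0].
  pose proof (Hpq (g O) ltac:(lia)).
  assert (HZ := lemZ r f u v Cr Huv).
  assert (Hbd : Rabs (f O (p (g O))) <= Cr * (v - u) ^ r).
  { apply HZ with (z := z).
    - intros i x Hi. destruct i as [|i].
      + apply (continuity_pt_minus Phi (fun _ => L)). apply contPhi.
        apply continuity_pt_const. intros ? ?. reflexivity.
      + apply contE. lia.
    - intros i x Hi Hx. destruct i as [|i].
      + pose proof (derivable_pt_lim_minus (E 0) (fun _ => L) x (E 1 x) 0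
           (derE 0 ltac:(lia) x ltac:(lra)) (derivable_pt_lim_const L x)) as HD.
        rewrite Rminus_0_r in HD. exact HD.
      + apply derE. lia. lra.
    - intros x Hx. unfold f. rewrite fE by lia. apply Er_le_Cr.
    - intros k Hk. destruct (Hzp k Hk) as [[Hz1 Hz2] Hz3]. destruct (Hg1 k Hk) as [Hgk _].
      destruct (Hrange (g k) ltac:(lia)). split. lra. exact Hz3.
    - intros k Hk. destruct (Hzp k ltac:(lia)) as [[Hz1 Hz2] _].
      destruct (Hzp (S k) Hk) as [[Hz4 Hz5] _].
      pose proof (Hg2 k Hk). destruct (Hg1 (S k) Hk).
      pose proof (Hmono (g k) (g (S k)) ltac:(lia)). lra.
    - lra. }
  destruct (Hcp O ltac:(lia)) as [_ Hge]. simpl in Hbd. lra.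
Qed.


Definition Xf mu := (b - a) * rroot r Cr * Rpower mu (- / INR r).

Lemma Rpower_pos x y : 0 < Rpower x y.
Proof. unfold Rpower. apply exp_pos. Qed.

Lemma Xf_nonneg mu : 0 <= Xf mu.
Proof.
  unfold Xf. apply Rmult_le_pos. apply Rmult_le_pos. lra.
  unfold rroot. destruct Rlt_dec. apply Rlt_le, Rpower_pos. lra.
  apply Rlt_le, Rpower_pos.
Qed.

Lemma INR_r_pos : 0 < INR r.
Proof. apply lt_0_INR. lia. Qed.

Lemma hcond mu (M : nat) s : 0 < mu -> 0 < s -> 4 <= s ^ r -> s * Xf mu < INR M -> 0 < INR M ->
  Cr * ((b - a) / INR M) ^ r < mu / 4.
Proof.
  intros Hmu Hs Hsr HX HM. pose proof Cr_ge0 as HC0. pose proof INR_r_pos as Hr0.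
  destruct (Req_dec Cr 0) as [E0|E0]. { rewrite E0. lra. }
  assert (HCp : 0 < Cr) by lra.
  assert (Hrr : rroot r Cr = Rpower Cr (/ INR r)) by (unfold rroot; destruct Rlt_dec; [reflexivity|lra]).
  set (Y1 := Rpower Cr (/ INR r)). set (Y2 := Rpower mu (- / INR r)).
  assert (HY1 : Y1 ^ r = Cr).
  { rewrite <- Rpower_pow by apply Rpower_pos. unfold Y1. rewrite Rpower_mult, Rinv_l, Rpower_1; lra. }
  assert (HY2 : Y2 ^ r = / mu).
  { rewrite <- Rpower_pow by apply Rpower_pos. unfold Y2. rewrite Rpower_mult.
    replace (- / INR r * INR r) with (Ropp R1) by (field; lra).
    rewrite Rpower_Ropp, Rpower_1; lra. }
  set (h := (b - a) / INR M).
  assert (Hh : 0 < h) by (unfold h; apply Rdiv_lt_0_compat; lra).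
  assert (HY1p : 0 < Y1) by apply Rpower_pos. assert (HY2p : 0 < Y2) by apply Rpower_pos.
  set (t := s * h * (Y1 * Y2)).
  assert (Ht : t < 1).
  { unfold Xf in HX. rewrite Hrr in HX. fold Y1 Y2 in HX. unfold t, h.
    apply Rmult_lt_reg_r with (INR M). exact HM.
    replace (s * ((b - a) / INR M) * (Y1 * Y2) * INR M) with (s * ((b - a) * Y1 * Y2)) by (field; lra).
    lra. }
  assert (Ht0 : 0 <= t).
  { unfold t. apply Rlt_le. apply Rmult_lt_0_compat. apply Rmult_lt_0_compat; lra. apply Rmult_lt_0_compat; lra. }
  destruct (pow_lt_1_compat t r (conj Ht0 Ht) ltac:(lia)) as [_ Htr].
  unfold t in Htr. rewrite !Rpow_mult_distr, HY1, HY2 in Htr.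
  assert (Hhr : 0 <= h ^ r) by (apply pow_le; lra).
  assert (Hk : s ^ r * (Cr * h ^ r) < mu).
  { apply Rmult_lt_reg_r with (/ mu). apply Rinv_0_lt_compat; lra.
    rewrite Rinv_r by lra. replace (s ^ r * (Cr * h ^ r) * / mu) with (s ^ r * h ^ r * (Cr * / mu)) by ring.
    exact Htr. }
  assert (0 <= Cr * h ^ r) by (apply Rmult_le_pos; lra).
  assert (4 * (Cr * h ^ r) <= s ^ r * (Cr * h ^ r)) by (apply Rmult_le_compat_r; lra).
  lra.
Qed.

Definition sr := if Nat.eqb r 1 then 4 else 2.

Lemma sr_facts : 0 < sr /\ 4 <= sr ^ r /\ sr * (4 * INR r - 3) <= 10 * INR r.
Proof.
  unfold sr. destruct (Nat.eqb r 1) eqn:E1.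
  - apply Nat.eqb_eq in E1. rewrite E1. simpl. lra.
  - apply Nat.eqb_neq in E1. assert (H2 : (2 <= r)%nat) by lia.
    pose proof (le_INR _ _ H2) as H2'. simpl in H2'.
    split. lra. split.
    + replace 4 with (2 ^ 2) by (simpl; lra). apply Rle_pow. lra. exact H2.
    + lra.
Qed.

Definition Mj (j : Z) : nat := Z.to_nat (up (sr * Xf (pw j))).

Lemma Mj_facts j : sr * Xf (pw j) < INR (Mj j) /\ INR (Mj j) <= sr * Xf (pw j) + 1.
Proof.
  unfold Mj. destruct (archimed (sr * Xf (pw j))) as [A1 A2].
  assert (H0 : 0 <= sr * Xf (pw j)).
  { apply Rmult_le_pos. destruct sr_facts; lra. apply Xf_nonneg. }
  assert (Hup : (0 <= up (sr * Xf (pw j)))%Z) by (apply le_IZR; simpl; lra).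
  rewrite INR_IZR_INZ, Z2Nat.id by exact Hup. lra.
Qed.

Lemma good_bound j l : good (Lab (pw j)) l -> (length l <= Mj j * (4 * (r - 1) + 1) + 1)%nat.
Proof.
  destruct l as [|x l']. { intros _. apply Nat.le_0_l. }
  intros Hg. set (mu := pw j). pose proof (pw_pos j) as Hmu. fold mu in Hmu.
  assert (Hx : Lab mu x) by (destruct Hg as [Hf _]; inversion Hf; assumption).
  destruct (good_chain (Lab mu) b (Qp mu) (Qq mu)
     (fun y Hy => proj2 (proj1 Hy)) (step mu) l' x Hg) as [p [q [H1 H2]]].
  destruct (Mj_facts j) as [HM1 HM2].
  assert (HM : 0 < INR (Mj j)).
  { pose proof (Xf_nonneg (pw j)). destruct sr_facts as [Hs _].
    assert (0 <= sr * Xf (pw j)) by (apply Rmult_le_pos; lra). lra. }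
  set (M := Mj j) in *. set (h := (b - a) / INR M).
  assert (Hh : 0 < h) by (unfold h; apply Rdiv_lt_0_compat; lra).
  assert (HMh : a + INR M * h = b) by (unfold h; field; lra).
  destruct Hx as [HIx _].
  assert (Hcc : (length l' <= M * (4 * (r - 1) + 1))%nat).
  { apply (chain_count p q (length l') a h M (4 * (r - 1)) Hh).
    - intros i Hi. destruct (H1 i Hi) as [A1 [A2 [A3 _]]]. unfold inI in HIx. split. lra. split. lra. lra.
    - exact H2.
    - intros s0 k Hk Hs0 Hrange.
      assert (Hk' : INR k + 1 <= INR M) by (rewrite <- S_INR; apply le_INR; lia).
      pose proof (pos_INR k).
      apply (piece mu (a + INR k * h) (a + INR k * h + h) p q (length l') s0 Hmu).
      + nra.
      + lra.
      + assert (INR k * h + h <= INR M * h) by nra. lra.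
      + replace (a + INR k * h + h - (a + INR k * h)) with h by ring.
        unfold h. destruct sr_facts as [Hs1 [Hs2 _]].
        apply (hcond mu M sr Hmu Hs1 Hs2 HM1 HM).
      + intros i Hi. destruct (H1 i Hi) as [A1 [A2 [A3 [A4 A5]]]]. auto.
      + exact H2.
      + exact Hs0.
      + exact Hrange. }
  simpl. lia.
Qed.

Lemma main_thm :
  let Cr := sup_norm a b (D r) in
  let valid (j : Z) := powerRZ 2 j <= sup_norm a b phi in
  exists (N : Z -> nat) (J : Z -> nat -> R -> Prop),
    (forall j i, valid j -> (i < N j)%nat -> is_interval (J j i)) /\
    (forall j i j' i', valid j -> (i < N j)%nat -> valid j' -> (i' < N j')%nat ->
       (j, i) <> (j', i') -> forall x, ~ (J j i x /\ J j' i' x)) /\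
    (forall x, (inI a b x /\ phi x <> 0) <->
       exists j i, valid j /\ (i < N j)%nat /\ J j i x) /\
    (forall j, valid j ->
       INR (N j) <= 10 * INR r *
         (1 + (b - a) * rroot r Cr * Rpower (powerRZ 2 j) (- / INR r))) /\
    (forall j i x, valid j -> (i < N j)%nat -> J j i x ->
       / 2 * powerRZ 2 j < Rabs (phi x) < 4 * powerRZ 2 j).
Proof.
  intros Cr' valid.
  assert (Hl : forall j, exists l, good (Lab (pw j)) l /\
             forall l', good (Lab (pw j)) l' -> (length l' <= length l)%nat).
  { intros j. apply exists_max with (B := (Mj j * (4 * (r - 1) + 1) + 1)%nat).
    apply good_bound. split; constructor. }
  set (LL := fun j => proj1_sig (constructive_indefinite_description _ (Hl j))).
  assert (HLL : forall j, good (Lab (pw j)) (LL j) /\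
             forall l', good (Lab (pw j)) l' -> (length l' <= length (LL j))%nat).
  { intros j. unfold LL. destruct (constructive_indefinite_description _ (Hl j)) as [l Hl']. exact Hl'. }
  exists (fun j => length (LL j)), (fun j i x => Ec (Lab (pw j)) (nth i (LL j) 0) x).
  split; [|split; [|split; [|split]]].
  - intros j i _ _ x y z Hx Hy Hz. apply Ec_interval with x y; assumption.
  - intros j i j' i' _ Hi _ Hi' Hne x [Hx1 Hx2].
    assert (Hj : j = j').
    { destruct Hx1 as [_ [F1 _]]. destruct Hx2 as [_ [F2 _]]. apply (Lab_dy_uniq j j' x F1 F2). }
    subst j'. assert (Hii : i <> i') by (intros ->; apply Hne; reflexivity).
    pose proof (Ec_trans _ _ _ _ Hx1 (Ec_sym _ _ _ Hx2)) as He.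
    destruct (HLL j) as [Hg _].
    destruct (Nat.lt_total i i') as [H|[H|H]].
    + apply (good_pairwise _ _ Hg i i' ltac:(lia)). exact He.
    + contradiction.
    + apply (good_pairwise _ _ Hg i' i ltac:(lia)). apply Ec_sym. exact He.
  - intros x. split.
    + intros [Hx Hphi].
      assert (HP : Phi x <> 0) by (rewrite Phi_eq by exact Hx; exact Hphi).
      destruct (Lab_exists x Hx HP) as [j Hj].
      destruct (HLL j) as [Hg Hmax].
      destruct (good_max_cover _ _ Hg Hmax x Hj) as [i [Hi He]].
      exists j, i. split. apply (Lab_valid _ _ Hj). split; assumption.
    + intros [j [i [_ [_ HJ]]]]. destruct HJ as [_ [Hx _]].
      pose proof (Lab_bounds _ _ Hx) as Hb. pose proof (pw_pos j).
      destruct Hx as [HIx _]. split. exact HIx.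
      rewrite <- Phi_eq by exact HIx. intros H0. rewrite H0, Rabs_R0 in Hb. lra.
  - intros j _. destruct (HLL j) as [Hg _].
    pose proof (le_INR _ _ (good_bound j _ Hg)) as HB.
    destruct (Mj_facts j) as [_ HM2]. destruct sr_facts as [Hs1 [_ Hs3]].
    pose proof (Xf_nonneg (pw j)) as HX. pose proof INR_r_pos.
    assert (Hr1 : 1 <= INR r) by (apply (le_INR 1); lia).
    rewrite plus_INR, mult_INR, plus_INR, mult_INR, minus_INR in HB by lia. simpl in HB.
    unfold Xf, pw in *. fold Cr in *. unfold Cr'. fold Cr.
    set (X := (b - a) * rroot r Cr * Rpower (powerRZ 2 j) (- / INR r)) in *.
    assert (H1 : INR (Mj j) * (4 * (INR r - 1) + 1) <= (sr * X + 1) * (4 * (INR r - 1) + 1))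
      by (apply Rmult_le_compat_r; lra).
    assert (H2 : sr * (4 * INR r - 3) * X <= 10 * INR r * X) by (apply Rmult_le_compat_r; lra).
    nra.
  - intros j i x _ _ HJ. destruct HJ as [_ [Hx _]].
    pose proof (Lab_bounds _ _ Hx) as Hb. pose proof (pw_pos j).
    destruct Hx as [HIx _]. rewrite Phi_eq in Hb by exact HIx. unfold pw in *. lra.
Qed.

End Main.

(* lambda = 2^j (j : Z) ranges over positive dyadics with lambda <= ||phi||_oo;
   the index set I_lambda is {iota : nat | iota < N j}, so |I_lambda| = N j;
   the intervals are J j iota. *)
Theorem theorem2p1 (a b : R) (r : nat) (phi : R -> R) (D : nat -> R -> R) :
  a < b -> (1 <= r)%nat -> is_Cr a b r phi D ->
  let Cr := sup_norm a b (D r) in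
  let valid (j : Z) := powerRZ 2 j <= sup_norm a b phi in
  exists (N : Z -> nat) (J : Z -> nat -> R -> Prop),
    (forall j i, valid j -> (i < N j)%nat -> is_interval (J j i)) /\
    (forall j i j' i', valid j -> (i < N j)%nat -> valid j' -> (i' < N j')%nat ->
       (j, i) <> (j', i') -> forall x, ~ (J j i x /\ J j' i' x)) /\
    (forall x, (inI a b x /\ phi x <> 0) <->
       exists j i, valid j /\ (i < N j)%nat /\ J j i x) /\
    (forall j, valid j ->
       INR (N j) <= 10 * INR r *
         (1 + (b - a) * rroot r Cr * Rpower (powerRZ 2 j) (- / INR r))) /\
    (forall j i x, valid j -> (i < N j)%nat -> J j i x ->
       / 2 * powerRZ 2 j < Rabs (phi x) < 4 * powerRZ 2 j).
Proof.
  intros Hab Hr HC. exact (main_thm a b r phi D Hab Hr HC).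
Qed.
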